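(* Fix a trade-off function $f$ and $\alpha\in(0,1)$. Let $D_{n+1}=((X_i,Y_i))_{i=1}^{n+1}$ consist of i.i.d. data points from a distribution $P$ on $\mathcal X\times\mathcal Y$ and let $D_n=((X_i,Y_i))_{i=1}^n$. Let $M$ be any $f$-DP mechanism (with respect to add/remove-one adjacency) and $C(\cdot,\cdot)$ any prediction-set map, sending a mechanism output and a point $x\in\mathcal X$ to a measurable subset of $\mathcal Y$. If $\mathbb P\big(Y_{n+1}\in C(M(D_{n+1}),X_{n+1})\big)\ge 1-\alpha$, then $\mathbb P\big(Y_{n+1}\in C(M(D_n),X_{n+1})\big)\ge f(\alpha)$. Probabilities are over the data and the randomness of $M$ (which is independent of the data).
   Context: Trade-off function: for distributions $P,Q$, $T(P,Q)(\alpha)=\inf_\phi\{1-\mathbb E_Q[\phi]:\mathbb E_P[\phi]\le\alpha\}$ over measurable tests $\phi$ with values in $[0,1]$. A function $f:[0,1]\to[0,1]$ is a trade-off function if it is convex, continuous, non-increasing and $f(\alpha)\le 1-\alpha$. A mechanism $M$ is $f$-DP if $T(M(D),M(D'))\ge f$ pointwise for all datasets $D,D'$ differing by the addition or removal of one entry. *)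

(* Defs.v *)
From HB Require Import structures.
From mathcomp Require Import all_boot all_order all_algebra.
From mathcomp Require Import all_classical all_reals all_analysis.
From mathcomp Require Import measurable_realfun.
Set Implicit Arguments. Unset Strict Implicit. Unset Printing Implicit Defensive.
Import Order.TTheory GRing.Theory Num.Theory numFieldNormedType.Exports.
Local Open Scope classical_set_scope.
Local Open Scope ring_scope.

(* A function f : [0,1] -> [0,1] (given as R -> R, only its values on [0,1]
   matter) is a trade-off function if it is convex, continuous,
   non-increasing and f(a) <= 1 - a. *)
Definition is_tradeoff_fun (R : realType) (f : R -> R) : Prop :=
  [/\ (forall a, 0 <= a <= 1 -> 0 <= f a <= 1),
      (forall a b t, 0 <= a <= 1 -> 0 <= b <= 1 -> 0 <= t <= 1 ->
          f (t * a + (1 - t) * b) <= t * f a + (1 - t) * f b),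
      {within `[0, 1]%classic, continuous f},
      (forall a b, 0 <= a <= 1 -> 0 <= b <= 1 -> a <= b -> f b <= f a) &
      (forall a, 0 <= a <= 1 -> f a <= 1 - a)].

Definition is_test d (O : measurableType d) (R : realType) (phi : O -> R) : Prop :=
  measurable_fun setT phi /\ (forall o, 0 <= phi o <= 1).

Definition tradeoff d (O : measurableType d) (R : realType)
    (P Q : probability O R) (a : R) : \bar R :=
  ereal_inf [set (1 - \int[Q]_o (phi o)%:E)%E
            | phi in [set phi : O -> R | is_test phi /\
                      (\int[P]_o (phi o)%:E <= a%:E)%E]].

Definition remove_one (T : Type) (D D' : seq T) : Prop :=
  exists2 i, (i < size D)%N & D' = take i D ++ drop i.+1 D.

Definition neighbors (T : Type) (D D' : seq T) : Prop :=
  remove_one D D' \/ remove_one D' D.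

Definition fDP (T : Type) d (O : measurableType d) (R : realType)
    (f : R -> R) (M : seq T -> probability O R) : Prop :=
  forall D D', neighbors D D' ->
    forall a, 0 <= a <= 1 -> ((f a)%:E <= tradeoff (M D) (M D') a)%E.

(* Main.v *)
Require Import Defs.
From HB Require Import structures.
From mathcomp Require Import all_boot all_order all_algebra.
From mathcomp Require Import all_classical all_reals all_analysis.
From mathcomp Require Import measurable_realfun.
From mathcomp Require Import ring lra.
Import Order.TTheory GRing.Theory Num.Theory numFieldNormedType.Exports.
Local Open Scope classical_set_scope.
Local Open Scope ring_scope.
Lemma three_slope (R : realType) (f : R -> R) t a u :
  is_tradeoff_fun f -> 0 <= t -> t < a -> a < u -> u <= 1 ->
  (u - a) * (f a - f t) <= (a - t) * (f u - f a).
Proof.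
case=> _ cvx _ _ _ ht ta au hu.
pose l := (u - a) / (u - t).
have hut : 0 < u - t by lra.
have hut' : u - t != 0 by rewrite gt_eqF.
have El : l * t + (1 - l) * u = a.
  rewrite /l; field; lra.
have l0 : 0 <= l by rewrite /l divr_ge0 //; lra.
have l1 : l <= 1 by rewrite /l ler_pdivrMr //; lra.
have H : f a <= l * f t + (1 - l) * f u.
  rewrite -{1}El; apply: cvx; apply/andP; split => //; lra.
have E2 : (u - t) * (l * f t + (1 - l) * f u) = (u - a) * f t + (a - t) * f u.
  by rewrite /l; field.
have := ler_wpM2l (ltW hut) H; rewrite E2 => H2.
nra.
Qed.
Lemma subgrad (R : realType) (f : R -> R) a :
  is_tradeoff_fun f -> 0 < a < 1 ->
  exists s, s <= 0 /\ forall t, 0 <= t <= 1 -> f a + s * (t - a) <= f t.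
Proof.
move=> hf /andP[a0 a1].
have [_ _ _ mono _] := hf.
pose S := [set (f a - f t) / (a - t) | t in [set t | 0 <= t < a]].
have S0 : S !=set0.
  by exists ((f a - f 0) / (a - 0)); exists 0 => //; apply/andP; split => //; rewrite lexx.
have Sub : forall u, a < u <= 1 -> ubound S ((f u - f a) / (u - a)).
  move=> u /andP[au u1] _ [t /andP[t0 ta] <-].
  have h := @three_slope _ _ _ _ _ hf t0 ta au u1.
  rewrite ler_pdivrMr ?subr_gt0 // mulrAC ler_pdivlMr ?subr_gt0 //.
  nra.
have Sle0 : ubound S 0.
  move=> _ [t /andP[t0 ta] <-].
  rewrite ler_pdivrMr ?subr_gt0 // mul0r subr_le0.
  apply: mono; try (apply/andP; split); lra.
have hs : has_sup S by split => //; exists 0.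
exists (sup S); split; first exact: ge_sup.
move=> t /andP[t0 t1].
have [ta|ta|ta] := ltgtP t a.
- have : (f a - f t) / (a - t) <= sup S.
    by apply: sup_upper_bound => //; exists t => //; apply/andP.
  rewrite ler_pdivrMr ?subr_gt0 //. nra.
- have : sup S <= (f t - f a) / (t - a).
    by apply: ge_sup => //; apply: Sub; apply/andP.
  rewrite ler_pdivlMr ?subr_gt0 //. nra.
- by rewrite ta subrr mulr0 addr0.
Qed.
Section K.
Context (dW dO : measure_display) (W : measurableType dW) (O : measurableType dO) (R : realType).
Variable k : W -> probability O R.
Hypothesis hk : forall A : set O, measurable A -> measurable_fun setT (fun w => k w A).
Definition kk : W -> {measure set O -> \bar R} := fun w => k w.
HB.instance Definition _ := isKernel.Build _ _ W O R kk hk.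

Lemma kernel_xsection (A : set (W * O)) : measurable A ->
  measurable_fun setT (fun w => k w (xsection A w)).
Proof.
move=> mA.
have := @measurable_prod_subset_xsection_kernel _ _ W O R kk setT measurableT.
move=> /(_ _) H.
have {}H := H _ A mA.
have -> : (fun w => k w (xsection A w)) = fun w => mrestr (kk w) measurableT (xsection A w).
  by apply/funext => w; rewrite /mrestr setIT.
apply: (proj2 (H _)).
move=> w; exists 2 => B mB; rewrite /mrestr setIT /kk.
by rewrite (le_lt_trans (probability_le1 _ _)) // ?lte_fin ?ltr1n.
Qed.
End K.

Theorem theorem2 (R : realType) (f : R -> R) (alpha : R)
  (dX dY dO dW : measure_display)
  (X : measurableType dX) (Y : measurableType dY)
  (O : measurableType dO) (W : measurableType dW)
  (Pr : probability W R) (Pdata : probability (X * Y)%type R)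
  (n : nat) (Z : 'I_n.+1 -> W -> (X * Y)%type)
  (M : seq (X * Y)%type -> probability O R)
  (C : O -> X -> set Y) :
  is_tradeoff_fun f ->
  0 < alpha < 1 ->
  (* the data points are measurable random variables ... *)
  (forall i, measurable_fun setT (Z i)) ->
  (* ... identically distributed with law Pdata ... *)
  (forall i (A : set (X * Y)%type), measurable A ->
     Pr (Z i @^-1` A) = Pdata A) ->
  (* ... and mutually independent *)
  (forall A : 'I_n.+1 -> set (X * Y)%type, (forall i, measurable (A i)) ->
     Pr (\bigcap_i (Z i @^-1` A i)) = (\prod_i Pr (Z i @^-1` A i))%E) ->
  fDP f M ->
  (* regularity: C is a (jointly measurable) prediction-set map *)
  measurable [set p : O * (X * Y) | C p.1 p.2.1 p.2.2] ->
  (* regularity: M is a Markov kernel when fed the random datasets *)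
  (forall A : set O, measurable A ->
     measurable_fun setT (fun w : W => (M [seq Z i w | i <- enum 'I_n.+1] A : \bar R))) ->
  (forall A : set O, measurable A ->
     measurable_fun setT
       (fun w : W => (M [seq Z (widen_ord (leqnSn n) i) w | i <- enum 'I_n] A : \bar R))) ->
  (\int[Pr]_w M [seq Z i w | i <- enum 'I_n.+1]
        [set o | C o (Z ord_max w).1 (Z ord_max w).2] >= (1 - alpha)%:E)%E ->
  (\int[Pr]_w M [seq Z (widen_ord (leqnSn n) i) w | i <- enum 'I_n]
        [set o | C o (Z ord_max w).1 (Z ord_max w).2] >= (f alpha)%:E)%E.
Proof.
move=> hf ha mZ _ _ hDP mE mk1 mk0 hyp.
pose D1 := fun w => [seq Z i w | i <- enum 'I_n.+1].
pose D0 := fun w => [seq Z (widen_ord (leqnSn n) i) w | i <- enum 'I_n].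
pose S := fun w => [set o | C o (Z ord_max w).1 (Z ord_max w).2].
pose E := [set p : O * (X * Y) | C p.1 p.2.1 p.2.2].
have mS w : measurable (S w).
  have -> : S w = ysection E (Z ord_max w).
    by apply/seteqP; split=> o; rewrite /ysection /= inE.
  exact: measurable_ysection.
pose A := [set p : W * O | C p.2 (Z ord_max p.1).1 (Z ord_max p.1).2].
have mA : measurable A.
  have mg : measurable_fun setT (fun p : W * O => (p.2, Z ord_max p.1)).
    apply: measurable_fun_pair; first exact: measurable_snd.
    exact: measurableT_comp (mZ ord_max) measurable_fst.
  have := mg measurableT _ mE; rewrite setTI.
  by congr measurable.
have xA w : xsection A w = S w.
  by apply/seteqP; split=> o; rewrite /xsection /= inE.
have ma : measurable_fun setT (fun w => M (D1 w) (S w)).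
  have := @kernel_xsection _ _ W O R (fun w => M (D1 w)) mk1 A mA.
  by congr measurable_fun; apply/funext => w; rewrite xA.
have mb : measurable_fun setT (fun w => M (D0 w) (S w)).
  have := @kernel_xsection _ _ W O R (fun w => M (D0 w)) mk0 A mA.
  by congr measurable_fun; apply/funext => w; rewrite xA.
have nb w : neighbors (D1 w) (D0 w).
  have e : D1 w = rcons (D0 w) (Z ord_max w).
    by rewrite /D1 /D0 enum_ordSr map_rcons -map_comp.
  have sz : size (D0 w) = n by rewrite /D0 size_map size_enum_ord.
  left; exists n; first by rewrite e size_rcons sz.
  rewrite e -cats1 take_size_cat // drop_oversize ?cats0 //.
  by rewrite size_cat sz /= addn1.
have key w : ((f (1 - fine (M (D1 w) (S w))))%:E <= M (D0 w) (S w))%E.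
  set P := M (D1 w); set Q := M (D0 w).
  have eP : P (S w) = (fine (P (S w)))%:E by rewrite fineK // fin_num_measure.
  have eQ : Q (S w) = (fine (Q (S w)))%:E by rewrite fineK // fin_num_measure.
  have P01 : 0 <= fine (P (S w)) <= 1.
    by rewrite -!lee_fin -eP measure_ge0 probability_le1.
  have Q01 : 0 <= fine (Q (S w)) <= 1.
    by rewrite -!lee_fin -eQ measure_ge0 probability_le1.
  have a01 : 0 <= 1 - fine (P (S w)) <= 1 by lra.
  apply: (le_trans (hDP _ _ (nb w) _ a01)).
  apply: ereal_inf_lbound.
  exists (\1_(~` S w) : O -> R).
    split.
      split; first exact/measurable_indic/measurableC.
      by move=> o; rewrite indicE; case: (_ \in _); rewrite ?lexx ?ler01.
    rewrite integral_indic //; last exact: measurableC.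
    rewrite setIT le_eqVlt; apply/orP; left; apply/eqP.
    by etransitivity; first exact: (probability_setC P (mS w)); rewrite eP -EFinB.
  rewrite integral_indic //; last exact: measurableC.
  rewrite setIT [X in (_ - X)%E](_ : _ = 1 - Q (S w))%E; last exact: (probability_setC Q (mS w)).
  by rewrite eQ -[1%E]/(1%:E) -!EFinB; congr EFin; lra.
have [s [s0 hs]] := @subgrad _ _ _ hf ha.
move: ha => /andP[a0 a1].
pose c := f alpha + s * (1 - alpha).
have i1 : Pr.-integrable setT (EFin \o cst (1 : R)).
  by apply: finite_measure_integrable_cst; exact: measurableT.
have ia : Pr.-integrable setT (fun w => M (D1 w) (S w)).
  apply: (le_integrable measurableT ma (g:=EFin \o cst (1:R))) => [w _|//].
  by rewrite /= gee0_abs ?measure_ge0 // normr1 probability_le1.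
have ib : Pr.-integrable setT (fun w => M (D0 w) (S w)).
  apply: (le_integrable measurableT mb (g:=EFin \o cst (1:R))) => [w _|//].
  by rewrite /= gee0_abs ?measure_ge0 // normr1 probability_le1.
have ic0 : Pr.-integrable setT (EFin \o cst c).
  by apply: finite_measure_integrable_cst; exact: measurableT.
have ic : Pr.-integrable setT (fun w => c%:E + (- s)%:E * M (D1 w) (S w))%E.
  apply: (integrableD measurableT); last exact: integrableZl.
  exact: ic0.
apply: (@le_trans _ _ (\int[Pr]_w (c%:E + (- s)%:E * M (D1 w) (S w)))%E); last first.
  apply: le_integral => // w _.
  have eP : M (D1 w) (S w) = (fine (M (D1 w) (S w)))%:E by rewrite fineK // fin_num_measure.
  have P01 : 0 <= fine (M (D1 w) (S w)) <= 1.
    by rewrite -!lee_fin -eP measure_ge0 probability_le1.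
  apply: le_trans (key w); rewrite eP -EFinM -EFinD lee_fin.
  have := hs (1 - fine (M (D1 w) (S w))) ltac:(lra).
  rewrite /c; nra.
rewrite integralD //; last exact: integrableZl.
have hT : (Pr : {measure set W -> \bar R}) setT = 1%E by apply: probability_setT.
rewrite integralZl // integral_cst // hT mule1.
apply: (@le_trans _ _ (c%:E + (- s)%:E * (1 - alpha)%:E))%E.
  by rewrite -EFinM -EFinD lee_fin /c; nra.
by rewrite leeD2l // lee_wpmul2l // lee_fin oppr_ge0.
Qed.
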